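(* Let $t$ and $m$ be positive integers. Then, as formal power series in $q$, \[ \sum_{n=0}^{\infty}p_{mt,t}(n)q^{n}= \frac{1}{(q;q)_{\infty}}\sum_{n=0}^{\infty}(-1)^{n} q^{\frac{1}{2}(mn^{2}-(m-2)n)t}. \]
   Context: A partition $\lambda$ of a non-negative integer $n$ is a non-increasing sequence of positive integers (its parts) summing to $n$ (the empty partition is the unique partition of $0$). For positive integers $A$ and $a$, $\mathrm{mex}_{A,a}(\lambda)$ denotes the smallest positive integer congruent to $a$ modulo $A$ that is not a part of $\lambda$. Then $p_{A,a}(n)$ denotes the number of partitions $\lambda$ of $n$ satisfying $\mathrm{mex}_{A,a}(\lambda)\equiv a \pmod{2A}$. Also $(a;q)_\infty:=\prod_{j=0}^{\infty}(1-aq^j)$. *)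

(* Defs.v *)
From mathcomp Require Import all_boot all_order all_algebra.
Set Implicit Arguments. Unset Strict Implicit. Unset Printing Implicit Defensive.
Import GRing.Theory Num.Theory.

Definition is_partition (n : nat) (l : seq nat) : bool :=
  [&& sorted geq l, all (fun x => 0 < x) l & sumn l == n].

Fixpoint all_seqs (k n : nat) : seq (seq nat) :=
  match k with
  | 0 => [:: [::]]
  | k'.+1 => [seq x :: s | x <- iota 1 n, s <- all_seqs k' n]
  end.

(* a finite list of candidates containing every partition of n
   (a partition of n has at most n parts, each at most n) *)
Definition candidates (n : nat) : seq (seq nat) :=
  undup (flatten [seq all_seqs k n | k <- iota 0 n.+1]).

Definition mex_pred (A a : nat) (l : seq nat) : pred nat :=
  fun k => [&& 0 < k, k == a %[mod A] & k \notin l].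

Lemma mex_ex (A a : nat) (l : seq nat) : 0 < A -> exists k, mex_pred A a l k.
Proof.
move=> A0; exists (a + A * (sumn l).+1).
have Hle : forall x, x \in l -> x <= sumn l.
  elim: l => //= y l IH x; rewrite inE => /orP [/eqP -> | /IH H];
    [exact: leq_addr | exact: leq_trans H (leq_addl _ _)].
apply/and3P; split.
- by rewrite ltn_addl // muln_gt0 A0.
- by rewrite addnC mulnC modnMDl.
- apply/negP => /Hle H.
  have : sumn l < a + A * (sumn l).+1.
    apply: leq_trans (leq_addl _ _); rewrite -[X in X <= _]mul1n.
    exact: leq_mul.
  by rewrite ltnNge H.
Qed.

(* smallest positive integer congruent to a mod A that is not a part of l
   (only meaningful for A > 0; set to 0 otherwise) *)
Definition mex (A a : nat) (l : seq nat) : nat :=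
  (if 0 < A as b return (0 < A = b -> nat)
   then fun h => ex_minn (mex_ex a l h)
   else fun _ => 0) erefl.

Definition p_mex (A a n : nat) : nat :=
  count (fun l => is_partition n l && (mex A a l == a %[mod 2 * A])) (candidates n).

Local Open Scope ring_scope.

Definition fps := nat -> int.

Definition fps_mul (f g : fps) : fps :=
  fun N => \sum_(i < N.+1) f i * g (N - i)%N.

Definition fps_one : fps := fun N => (N == 0)%:R.

(* (q;q)_oo = prod_{j>=1} (1 - q^j): its N-th coefficient is that of the
   finite product prod_{j=1}^{N} (1 - q^j), as the other factors are 1 + O(q^{N+1}). *)
Definition qq_inf : fps :=
  fun N => (\prod_(1 <= j < N.+1) (1 - 'X^j : {poly int}))`_N.

Definition p_mex_gf (A a : nat) : fps := fun N => (p_mex A a N)%:R.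

(* exponent (1/2)(m n^2 - (m-2) n) t  =  t * (m * n(n-1)/2 + n) *)
Definition expo (m t n : nat) : nat := (t * (m * (n * n.-1 %/ 2) + n))%N.

(* sum_{n>=0} (-1)^n q^{expo m t n}; since expo m t n >= n for t, m >= 1,
   only n <= N can contribute to the coefficient of q^N. *)
Definition theta_series (m t : nat) : fps :=
  fun N => \sum_(n < N.+1 | expo m t n == N) (-1) ^+ n.

(* Main.v *)
Require Import Defs.
From mathcomp Require Import all_boot all_order all_algebra.
From mathcomp Require Import zify ring.
Set Implicit Arguments. Unset Strict Implicit. Unset Printing Implicit Defensive.
Import GRing.Theory Num.Theory.

Section Part1.

Lemma mem_le_sumn (l : seq nat) y : y \in l -> (y <= sumn l)%N.
Proof.
elim: l => //= x l IH; rewrite inE => /orP [/eqP -> | /IH H]; first exact: leq_addr.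
exact: leq_trans H (leq_addl _ _).
Qed.

Lemma size_le_sumn (l : seq nat) : all (fun x => 0 < x)%N l -> (size l <= sumn l)%N.
Proof. elim: l => //= x l IH /andP [h1 h2]; have := IH h2; lia. Qed.

Lemma mem_all_seqs n (s : seq nat) : all (fun x => 0 < x <= n)%N s -> s \in all_seqs (size s) n.
Proof.
elim: s => [|x s IH] /=; first by rewrite inE.
move=> /andP [hx hs]; apply/allpairsP; exists (x, s) => /=; split => //.
by rewrite mem_iota; lia.
by apply: IH.
Qed.

Lemma mem_cand n l : is_partition n l -> l \in candidates n.
Proof.
case/and3P => _ hpos /eqP hs.
rewrite /candidates mem_undup; apply/flattenP; exists (all_seqs (size l) n).
  apply/mapP; exists (size l) => //; rewrite mem_iota /= add0n ltnS -hs; exact: size_le_sumn.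
apply: mem_all_seqs; apply/allP => x hx.
have := allP hpos x hx; have := mem_le_sumn hx; rewrite hs => a b; by rewrite b a.
Qed.

Definition P N := filter (is_partition N) (candidates N).
Lemma mem_P N l : (l \in P N) = is_partition N l.
Proof. by rewrite mem_filter; case h: (is_partition N l) => //=; apply: mem_cand. Qed.
Lemma uniq_P N : uniq (P N).
Proof. by rewrite filter_uniq // undup_uniq. Qed.

Definition cnt N (Q : pred (seq nat)) := count Q (P N).
Lemma cnt_eq N (Q1 Q2 : pred (seq nat)) :
  (forall l, is_partition N l -> Q1 l = Q2 l) -> cnt N Q1 = cnt N Q2.
Proof. move=> h; apply: eq_in_count => l; rewrite mem_P; exact: h. Qed.

Definition ins (x : nat) (l : seq nat) := sort geq (x :: l).

Lemma geq_tot : total geq. Proof. move=> a b /=; exact: leq_total. Qed.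
Lemma geq_tr : transitive geq. Proof. move=> a b c /= h1 h2; exact: leq_trans h2 h1. Qed.
Lemma geq_anti : antisymmetric geq. Proof. move=> a b /= h; apply/eqP; rewrite eqn_leq andbC; exact: h. Qed.

Lemma psort x l : perm_eq (ins x l) (x :: l).
Proof. exact: permEl (perm_sort _ _). Qed.

Lemma mem_ins x l y : (y \in ins x l) = (y == x) || (y \in l).
Proof. by rewrite mem_sort inE. Qed.

Lemma ins_part N x l : (0 < x)%N -> is_partition N l -> is_partition (N + x) (ins x l).
Proof.
move=> hx /and3P [_ hp /eqP hs]; apply/and3P; split.
- exact: sort_sorted geq_tot _.
- by rewrite (perm_all _ (psort x l)) /= hx.
- by rewrite (perm_sumn (psort x l)) /= hs addnC.
Qed.

Lemma rem_part N x l : x \in l -> is_partition N l -> is_partition (N - x) (rem x l).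
Proof.
move=> hx /and3P [hso hp /eqP hs]; have hpe := perm_to_rem hx; apply/and3P; split.
- exact: (subseq_sorted geq_tr (rem_subseq x l) hso).
- by move: hp; rewrite (perm_all _ hpe) /= => /andP [].
- by move: hs; rewrite (perm_sumn hpe) /= => <-; rewrite addKn.
Qed.

Lemma ins_rem x l : sorted geq l -> x \in l -> ins x (rem x l) = l.
Proof.
move=> hs hx; apply: (sorted_eq geq_tr geq_anti) => //.
  exact: sort_sorted geq_tot _.
rewrite perm_sym; apply: perm_trans (perm_to_rem hx) _; rewrite perm_sym; exact: psort.
Qed.

Lemma rem_ins x l : sorted geq l -> rem x (ins x l) = l.
Proof.
move=> hs; apply: (sorted_eq geq_tr geq_anti) => //.
  exact: (subseq_sorted geq_tr (rem_subseq x (ins x l)) (sort_sorted geq_tot _)).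
rewrite -(perm_cons x); apply: perm_trans (psort x l).
rewrite perm_sym; apply: perm_to_rem; by rewrite mem_ins eqxx.
Qed.

Lemma bij x N (Q : pred (seq nat)) : (0 < x <= N)%N ->
  cnt N (fun l => (x \in l) && Q l) = cnt (N - x) (fun l => Q (ins x l)).
Proof.
move=> /andP [hx0 hxN]; rewrite /cnt -!size_filter.
rewrite -[RHS](size_map (ins x)).
apply: perm_size; apply: uniq_perm.
- exact: filter_uniq (uniq_P _).
- rewrite map_inj_in_uniq; first exact: filter_uniq (uniq_P _).
  move=> l1 l2 H1 H2 e; move: H1 H2; rewrite !mem_filter => /andP [_ +] /andP [_ +].
  move=> /andP [/and3P [h1 _ _] _] /andP [/and3P [h2 _ _] _].
  by rewrite -(rem_ins x h1) e rem_ins.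
move=> y; apply/idP/idP.
- rewrite mem_filter mem_P => /andP [/andP [hxy hQ] hy].
  apply/mapP; exists (rem x y); last by rewrite ins_rem //; case/and3P: hy.
  by rewrite mem_filter mem_P ins_rem ?hQ ?rem_part //; case/and3P: hy.
- case/mapP => l; rewrite mem_filter mem_P => /andP [hQ hl] ->.
  rewrite mem_filter mem_P mem_ins eqxx hQ /=.
  by have := ins_part hx0 hl; rewrite subnK.
Qed.

Lemma count_split (b Q : pred (seq nat)) s :
  count Q s = (count (fun l => b l && Q l) s + count (fun l => ~~ b l && Q l) s)%N.
Proof. elim: s => //= y s ->; case: (b y); case: (Q y) => /=; lia. Qed.

End Part1.

Section Part2.

Definition pk k N := cnt N (fun l => all (fun y => y <= k)%N l).

Lemma all_leS k (l : seq nat) :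
  all (fun y => y <= k)%N l = all (fun y => y <= k.+1)%N l && (k.+1 \notin l).
Proof.
elim: l => //= y l ->; rewrite inE negb_or.
have -> : (y <= k)%N = (y <= k.+1)%N && (k.+1 != y) by lia.
by case: (y <= k.+1)%N; case: (k.+1 != y); case: (all _ l); case: (k.+1 \in l).
Qed.

Lemma pk_rec k N : pk k.+1 N = (pk k N + (if (k.+1 <= N)%N then pk k.+1 (N - k.+1) else 0))%N.
Proof.
rewrite /pk {1}/cnt (count_split (fun l => k.+1 \in l)) addnC; congr (_ + _)%N.
  by apply: eq_count => l /=; rewrite [RHS](all_leS k) andbC.
case: ifP => h.
  rewrite -/(cnt _ _) bij ?h //; apply: eq_count => l /=.
  by rewrite (perm_all _ (psort _ _)) /= leqnn.
apply/eqP; rewrite -leqn0 leqNgt -has_count; apply/negP => /hasP [l].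
rewrite mem_P => /and3P [_ _ /eqP hs] /andP [hl _].
by have := mem_le_sumn hl; rewrite hs h.
Qed.

Lemma pk0 N : pk 0 N = (N == 0)%N.
Proof.
rewrite /pk (@cnt_eq _ _ (pred1 [::])); last first.
  move=> l /and3P [_ hp _] /=; case: l hp => //= y l /andP [hy _].
  by rewrite leqNgt hy.
rewrite /cnt count_uniq_mem ?uniq_P // mem_P /is_partition /= eq_sym.
by case: N.
Qed.

Lemma pk_big k N : (N <= k)%N -> pk k N = pk N N.
Proof.
move=> h; apply: cnt_eq => l /and3P [_ _ /eqP hs].
have H : forall k', (N <= k')%N -> all (fun y => y <= k')%N l.
  move=> k' hk; apply/allP => y hy; have := mem_le_sumn hy; lia.
by rewrite !H.
Qed.

Local Open Scope ring_scope.

Definition EE k : {poly int} := \prod_(1 <= j < k.+1) (1 - 'X^j).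
Definition Pp k M : {poly int} := \poly_(i < M) ((pk k i)%:R : int).

Lemma ES k : EE k.+1 = EE k * (1 - 'X^(k.+1)).
Proof. by rewrite /EE big_nat_recr. Qed.

Lemma coef_agree (p p' r : {poly int}) N :
  (forall i, (i <= N)%N -> p`_i = p'`_i) -> (p * r)`_N = (p' * r)`_N.
Proof. move=> h; rewrite !coefM; apply: eq_bigr => i _; rewrite h // -ltnS; exact: ltn_ord. Qed.

Lemma step k M i : (i < M)%N -> (Pp k.+1 M * (1 - 'X^(k.+1)))`_i = (pk k i)%:R.
Proof.
move=> hi; rewrite mulrBr mulr1 coefB coefMXn !coef_poly hi pk_rec.
case: (ltnP i k.+1) => h.
  by rewrite addn0 subr0.
have -> : (i - k.+1 < M)%N by lia.
by rewrite natrD addrK.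
Qed.

Lemma euler_poly k M N : (N < M)%N -> (Pp k M * EE k)`_N = (N == 0)%:R.
Proof.
move=> hN; elim: k N hN => [|k IH] N hN.
  by rewrite /EE big_geq // mulr1 coef_poly hN pk0.
rewrite ES (mulrC (EE k)) mulrA; apply: etrans (IH N hN).
apply: coef_agree => i hi.
have hiM : (i < M)%N by apply: leq_ltn_trans hi hN.
by rewrite step // coef_poly hiM.
Qed.

Lemma E_stable k j : (j <= k)%N -> (EE k)`_j = (EE j)`_j.
Proof.
elim: k => [|k IH] h; first by have -> : j = 0%N by lia.
case: (ltngtP j k.+1) => hj; last by rewrite hj.
  rewrite ES mulrBr mulr1 coefB coefMXn hj subr0; apply: IH; lia.
lia.
Qed.

Lemma qqE N : qq_inf N = (EE N)`_N. Proof. by []. Qed.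

Definition G : fps := fun N => (pk N N)%:R.

Lemma euler N : fps_mul G qq_inf N = fps_one N.
Proof.
rewrite /fps_one; apply: (etrans _ (@euler_poly N N.+1 N (ltnSn N))).
rewrite /fps_mul coefM.
apply: eq_bigr => i _; have hi := ltn_ord i.
have hiN : (i <= N)%N by rewrite -ltnS.
rewrite coef_poly hi /G qqE (@pk_big N i hiN).
by rewrite (@E_stable N (N - i) (leq_subr _ _)).
Qed.

Lemma qq0 : qq_inf 0 = 1.
Proof. by rewrite qqE /EE big_geq // coef1. Qed.

Lemma uniqF (F : fps) (hF : forall N, fps_mul F qq_inf N = fps_one N) N : F N = G N.
Proof.
elim/ltn_ind: N => N IH.
have H : forall X : fps, fps_mul X qq_inf N =
   \sum_(i < N) X i * qq_inf (N - i)%N + X N.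
  by move=> X; rewrite /fps_mul big_ord_recr /= subnn qq0 mulr1.
have e1 := hF N; have e2 := euler N; rewrite !H in e1 e2; have := etrans e1 (esym e2).
rewrite (eq_bigr (fun i : 'I_N => G i * qq_inf (N - i)%N)); first by move/addrI.
by move=> i _; rewrite IH.
Qed.

End Part2.

Section Part3.

Definition a m t j := (t + j * (m * t))%N.
Fixpoint L m t j := if j is j'.+1 then a m t j' :: L m t j' else [::].
Definition goodj m t (l : seq nat) j := all (fun y => y \in l) (L m t j).
Definition c m t j N := cnt N (fun l => goodj m t l j).

Lemma half_step j : (j.+1 * j %/ 2 = j * j.-1 %/ 2 + j)%N.
Proof.
case: j => [|k] //=.
have -> : (k.+2 * k.+1 = k.+1 * 2 + k.+1 * k)%N by nia.
by rewrite divnMDl // addnC.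
Qed.

Lemma expoS m t j : expo m t j.+1 = (expo m t j + a m t j)%N.
Proof.
rewrite /expo /a /= half_step.
set X := (j * j.-1 %/ 2)%N; clearbody X. ring.
Qed.

Lemma expo_ge m t n : (0 < t)%N -> (n <= expo m t n)%N.
Proof. move=> ht; rewrite /expo; exact: leq_trans (leq_addl _ n) (leq_pmull _ ht). Qed.

Lemma memL m t j y : (0 < m * t)%N -> y \in L m t j -> (y < a m t j)%N.
Proof.
move=> hA; elim: j => //= j IH; rewrite inE => /orP [/eqP -> | /IH h].
  rewrite /a; nia.
move: h; rewrite /a; nia.
Qed.

Lemma pkN N : pk N N = cnt N (fun _ => true).
Proof.
apply: cnt_eq => l /and3P [_ _ /eqP hs]; apply/allP => y hy; have := mem_le_sumn hy; lia.
Qed.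

Lemma c_formula m t j N : (0 < t)%N -> (0 < m)%N ->
  c m t j N = if (expo m t j <= N)%N then pk (N - expo m t j) (N - expo m t j) else 0%N.
Proof.
move=> ht hm; have hA : (0 < m * t)%N by rewrite muln_gt0 hm ht.
elim: j N => [|j IH] N.
  by rewrite /expo div0n muln0 addn0 muln0 subn0 pkN.
rewrite /c /goodj /= -/(goodj _ _ _ _) expoS.
case: (leqP (a m t j) N) => h.
  rewrite bij; last by rewrite /a h; lia.
  rewrite (@cnt_eq _ _ (fun l => goodj m t l j)); last first.
    move=> l _; apply: eq_in_all => y hy; rewrite mem_ins.
    have := memL hA hy; case: eqP => // ->; by rewrite ltnn.
  rewrite -/(c _ _ _ _) IH.
  have -> : (expo m t j <= N - a m t j)%N = (expo m t j + a m t j <= N)%N by lia.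
  by have -> : (N - a m t j - expo m t j = N - (expo m t j + a m t j))%N by lia.
have -> : (expo m t j + a m t j <= N)%N = false by lia.
apply/eqP; rewrite -leqn0 leqNgt -has_count; apply/negP => /hasP [l].
rewrite mem_P => /and3P [_ _ /eqP hs] /andP [hl _].
have := mem_le_sumn hl; rewrite hs; lia.
Qed.

Lemma exJ m t (ht : (0 < t)%N) (hm : (0 < m)%N) (l : seq nat) : exists j, a m t j \notin l.
Proof.
exists (sumn l); apply/negP => /mem_le_sumn; rewrite /a.
have : (0 < m * t)%N by rewrite muln_gt0 hm ht.
nia.
Qed.

Definition Jof m t ht hm l := ex_minn (@exJ m t ht hm l).

Lemma goodJ m t ht hm l j : goodj m t l j = (j <= @Jof m t ht hm l)%N.
Proof.
rewrite /Jof; case: ex_minnP => J hJ hmin.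
elim: j => [|j IH] //=.
rewrite /goodj in IH *; rewrite /= IH.
case: (ltngtP j J) => h.
- have -> : (a m t j \in l) by apply/negPn/negP => /hmin; lia.
  by [].
- by case: (a m t j \in l).
- by rewrite h (negbTE hJ).
Qed.

Lemma J_bound m t ht hm N l : is_partition N l -> (@Jof m t ht hm l <= N.+1)%N.
Proof.
move=> /and3P [_ _ /eqP hs]; rewrite leqNgt; apply/negP => h.
have : goodj m t l N.+2 by rewrite (goodJ ht hm).
rewrite /goodj /= => /andP [hl _]; have := mem_le_sumn hl; rewrite hs /a; nia.
Qed.

Lemma mexE A b l (h : (0 < A)%N) : mex A b l = ex_minn (mex_ex b l h).
Proof.
have H : forall (bb : bool) (e : (0 < A)%N = bb),
  (if bb as b' return ((0 < A)%N = b' -> nat) then fun h => ex_minn (mex_ex b l h)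
   else fun _ => 0%N) e = ex_minn (mex_ex b l h).
  case => e /=; first by rewrite (bool_irrelevance e h).
  by move: e; rewrite h.
exact: H.
Qed.

Lemma mex_char m t ht hm l : mex (m * t) t l = a m t (@Jof m t ht hm l).
Proof.
have hA : (0 < m * t)%N by rewrite muln_gt0 hm ht.
rewrite (mexE _ _ hA); case: ex_minnP => k hk hmin.
rewrite /Jof; case: ex_minnP => J hJ hminJ.
case/and3P: hk => k0 kmod knot.
have h1 : (k <= a m t J)%N.
  apply: hmin; apply/and3P; split => //.
  - rewrite /a; lia.
  - by rewrite /a addnC modnMDl.
have htA : (t <= m * t)%N by rewrite leq_pmull.
have htk : (t <= k)%N.
  rewrite leqNgt; apply/negP => hkt.
  move: kmod; rewrite (modn_small (leq_trans hkt htA)).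
  case: (ltngtP t (m * t)) => htA'.
  - by rewrite modn_small // => /eqP e; move: hkt; rewrite e ltnn.
  - lia.
  - by rewrite -htA' modnn => /eqP e; move: k0; rewrite e.
move: kmod; rewrite eqn_mod_dvd // => /dvdnP [i hi].
have hka : k = a m t i by rewrite /a -hi; lia.
have : (J <= i)%N by apply: hminJ; rewrite -hka.
move=> hJi; apply/eqP; rewrite eqn_leq h1 hka /a; nia.
Qed.

Lemma cond_char m t J : (0 < t)%N -> (0 < m)%N ->
  (a m t J == t %[mod 2 * (m * t)]) = ~~ odd J.
Proof.
move=> ht hm; rewrite eqn_mod_dvd /a ?leq_addr // addKn dvdn_pmul2r ?dvdn2 //.
by rewrite muln_gt0 hm ht.
Qed.

Local Open Scope ring_scope.

Lemma alt_gen K J : \sum_(j < K) (-1) ^+ j * ((j <= J)%N)%:R = (odd (minn K J.+1))%:R :> int.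
Proof.
elim: K => [|K IH]; first by rewrite big_ord0.
rewrite big_ord_recr /= IH.
case: (leqP K J) => h.
  have -> : minn K.+1 J.+1 = K.+1 by lia.
  have -> : minn K J.+1 = K by lia.
  rewrite mulr1 -signr_odd /=; by case: (odd K); rewrite /= ?addrN ?add0r.
have -> : minn K.+1 J.+1 = J.+1 by lia.
have -> : minn K J.+1 = J.+1 by lia.
by rewrite mulr0 addr0.
Qed.

Lemma alt K J : (J < K)%N -> \sum_(j < K) (-1) ^+ j * ((j <= J)%N)%:R = (~~ odd J)%:R :> int.
Proof. move=> h; rewrite alt_gen; have -> : minn K J.+1 = J.+1 by lia. by []. Qed.

Lemma count_sum (Q : pred (seq nat)) s : (count Q s)%:R = \sum_(x <- s) (Q x)%:R :> int.
Proof. elim: s => [|x s IH]; first by rewrite big_nil. by rewrite big_cons /= natrD IH. Qed.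

End Part3.

Section Part4.
Local Open Scope ring_scope.

Lemma theta_ext m t N' K : (0 < t)%N -> (N' <= K)%N ->
  theta_series m t N' = \sum_(n < K.+1) (if expo m t n == N' then (-1) ^+ n else 0).
Proof.
move=> ht hK; rewrite /theta_series.
have hK' : (N'.+1 <= K.+1)%N by [].
rewrite (@big_ord_widen_cond _ _ _ _ _ (fun n => expo m t n == N') (fun n => (-1) ^+ n) hK') big_mkcond.
apply: eq_bigr => n _; case: eqP => e //=.
have := expo_ge m n ht; rewrite e => hn; by rewrite ltnS hn.
Qed.

End Part4.

Unset Implicit Arguments.
Local Open Scope ring_scope.

Theorem lemma2p1 (t m : nat) (ht : (0 < t)%N) (hm : (0 < m)%N)
  (F : fps) (hF : forall N, fps_mul F qq_inf N = fps_one N) :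
  forall N : nat, p_mex_gf (m * t) t N = fps_mul F (theta_series m t) N.
Proof.
move=> N.
have LHS : p_mex_gf (m * t) t N = \sum_(j < N.+1) (-1) ^+ j * (c m t j N)%:R.
  rewrite /p_mex_gf /p_mex.
  have -> : count (fun l => is_partition N l && (mex (m * t) t l == t %[mod 2 * (m * t)]))
      (candidates N) = count (fun l => ~~ odd (Jof ht hm l)) (P N).
    rewrite /P count_filter; apply: eq_in_count => l.
    move=> _ /=; case: (is_partition N l); rewrite /= ?andbF ?andbT //.
    by rewrite mex_char cond_char.
  rewrite count_sum big_seq.
  rewrite (eq_bigr (fun l => \sum_(j < N.+2) (-1) ^+ j * (goodj m t l j)%:R)); last first.
    move=> l; rewrite mem_P => hl; rewrite -(@alt N.+2 _ (J_bound ht hm hl)).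
    by apply: eq_bigr => j _; rewrite (goodJ ht hm).
  rewrite -big_seq exchange_big big_ord_recr /=.
  rewrite [X in _ + X](_ : _ = 0); last first.
    rewrite -mulr_sumr -count_sum (_ : count _ (P N) = c m t N.+1 N) // c_formula //.
    have -> : (expo m t N.+1 <= N)%N = false by have := expo_ge m N.+1 ht; lia.
    by rewrite mulr0.
  rewrite addr0; apply: eq_bigr => j _; by rewrite -mulr_sumr -count_sum.
rewrite LHS /fps_mul.
rewrite [RHS](eq_bigr (fun i : 'I_N.+1 => \sum_(n < N.+1) G i * (if expo m t n == (N - i)%N then (-1) ^+ n else 0))); last first.
  by move=> i _; rewrite (uniqF hF) (@theta_ext m t (N - i) N ht (leq_subr _ _)) mulr_sumr.
rewrite exchange_big; apply: eq_bigr => n _ /=.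
rewrite c_formula //.
case: (leqP (expo m t n) N) => h.
  have hi0 : (N - expo m t n < N.+1)%N by lia.
  rewrite (bigD1 (Ordinal hi0)) //= big1 ?addr0.
    have -> : expo m t n == (N - (N - expo m t n))%N by apply/eqP; lia.
    by rewrite mulrC.
  move=> i hi; have -> : (expo m t n == (N - i)%N) = false; last by rewrite mulr0.
  apply/negP => /eqP e; move/eqP: hi; apply; apply: val_inj => /=.
  have := ltn_ord i; lia.
rewrite big1 ?mulr0 // => i _.
have -> : (expo m t n == (N - i)%N) = false by lia.
by rewrite mulr0.
Qed.
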